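(* In a graph $G$ with $\mu_\alpha(G)\leq 1$, every internal vertex is adjacent to at most two leaves.
   Context: All graphs are finite and simple. For a graph $H$, $\alpha(H)$ is the maximum size of an independent set, $i(H)$ the minimum size of an inclusion-maximal independent set, and $\mu_\alpha(H)=\alpha(H)-i(H)$. Let $U$ be the set of vertices of $G$ whose connected component is a complete graph. In $G-U$, vertices of degree $1$ are called leaves and the others are called internal vertices. *)

(* Defs.v *)
(* A finite simple graph is a symmetric irreflexive relation
   e : rel T on a finType T. *)
From mathcomp Require Import all_boot.
Set Implicit Arguments. Unset Strict Implicit. Unset Printing Implicit Defensive.

Section Graphs.
Variables (T : finType) (e : rel T).

Definition independent (S : {set T}) : bool :=
  [forall x in S, forall y in S, ~~ e x y].

Definition maximal_independent (S : {set T}) : bool :=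
  independent S && [forall x, (x \notin S) ==> ~~ independent (x |: S)].

Definition alpha : nat := \max_(S : {set T} | independent S) #|S|.

(* i(G): minimum size of a maximal independent set (#|T| is a harmless
   default: maximal independent sets always exist and have size <= #|T|) *)
Definition imin : nat :=
  \big[minn/#|T|]_(S : {set T} | maximal_independent S) #|S|.

(* mu_alpha(G) = alpha(G) - i(G)  (always >= 0) *)
Definition mu_alpha : nat := alpha - imin.

Definition component (v : T) : {set T} := [set y | connect e v y].

Definition complete_component (v : T) : bool :=
  [forall x in component v, forall y in component v, (x != y) ==> e x y].

Definition Uset : {set T} := [set v | complete_component v].

Definition nbrGU (v : T) : {set T} := [set y | e v y & y \notin Uset].

Definition leaf (v : T) : bool := (v \notin Uset) && (#|nbrGU v| == 1).
Definition internal (v : T) : bool := (v \notin Uset) && (#|nbrGU v| != 1).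

End Graphs.

(* Main.v *)
Require Import Defs.
From mathcomp Require Import all_boot.
From mathcomp Require Import zify.

Lemma bigmin_le_seq (I : eqType) (r : seq I) (P : pred I) (F : I -> nat) d x :
  x \in r -> P x -> \big[minn/d]_(y <- r | P y) F y <= F x.
Proof.
elim: r => [|a r IH] //=; rewrite inE big_cons => /orP [/eqP <- ->|hx hP].
  by apply: geq_minl.
case: (P a); last exact: IH.
by apply: leq_trans (geq_minr _ _) (IH hx hP).
Qed.

Lemma leaf_nbr (T : finType) (e : rel T) (esym : symmetric e) v y z :
  leaf e y -> e v y -> v \notin Uset e -> e y z -> z = v.
Proof.
move=> /andP [hyU /cards1P [w hw]] hvy hvU hyz.
have hv : v \in nbrGU e y by rewrite inE esym hvy hvU.
case hzU: (z \in Uset e).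
  exfalso; move: hyU; rewrite !inE => /negP; apply.
  rewrite /complete_component.
  have -> : component e y = component e z.
    apply/setP => u; rewrite !inE; apply/idP/idP => h.
      by apply: connect_trans h; apply: connect1; rewrite esym.
    by apply: connect_trans h; apply: connect1.
  by move: hzU; rewrite inE /complete_component.
have hz : z \in nbrGU e y by rewrite inE hyz hzU.
by move: hv hz; rewrite hw !inE => /eqP -> /eqP.
Qed.

Theorem corollary6 (T : finType) (e : rel T)
  (esym : symmetric e) (eirr : irreflexive e)
  (hmu : mu_alpha e <= 1) (v : T) (hv : internal e v) :
  #|[set y | e v y & leaf e y]| <= 2.
Proof.
set L := [set y | e v y & leaf e y].
have hvU : v \notin Uset e by case/andP: hv.
have i1 : independent e [set v].
  by apply/forallP => x; apply/implyP; rewrite inE => /eqP ->;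
     apply/forallP => y; apply/implyP; rewrite inE => /eqP ->; rewrite eirr.
pose A := [arg max_(S > [set v] | independent e S && (v \in S)) #|S|].
have [hAi hvA hAmax] : [/\ independent e A, v \in A &
    forall S, independent e S && (v \in S) -> #|S| <= #|A|].
  rewrite /A; case: arg_maxnP; first by rewrite i1 set11.
  by move=> S /andP [h1 h2] h3; split.
have hAm : maximal_independent e A.
  rewrite /maximal_independent hAi /=; apply/forallP => x; apply/implyP => hx.
  apply/negP => hxi.
  have := hAmax (x |: A); rewrite hxi in_setU1 hvA orbT /=.
  by move=> /(_ isT); rewrite cardsU1 hx ltnn.
have himin : imin e <= #|A|.
  by rewrite /imin; apply: bigmin_le_seq; rewrite ?mem_index_enum.
have hindA x y : x \in A -> y \in A -> ~~ e x y.
  by move=> hx hy; move/forallP: hAi => /(_ x); rewrite hx => /forallP /(_ y); rewrite hy.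
have hL y : e v y && leaf e y -> e v y /\ leaf e y by move=> /andP.
pose B := (A :\ v) :|: L.
have hBi : independent e B.
  apply/forallP => x; apply/implyP => hx; apply/forallP => y; apply/implyP => hy.
  apply/negP => hxy.
  move: hx hy; rewrite !inE => /orP [/andP [hxv hxA]|hxL] /orP [/andP [hyv hyA]|hyL].
  - by move: (hindA x y hxA hyA); rewrite hxy.
  - case: (hL y hyL) => h1 h2; move/eqP: hxv; apply.
    have hyx : e y x by rewrite esym. exact: (@leaf_nbr T e esym v y x h2 h1 hvU hyx).
  - case: (hL x hxL) => h1 h2; move/eqP: hyv; apply.
    exact: (@leaf_nbr T e esym v x y h2 h1 hvU hxy).
  - case: (hL x hxL) => h1 h2; case: (hL y hyL) => h3 h4.
    have eyv := @leaf_nbr T e esym v x y h2 h1 hvU hxy; subst y.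
    by rewrite eirr in h3.
have hI : (A :\ v) :&: L = set0.
  apply/setP => x; rewrite !inE; apply/negP => /andP [/andP [_ hxA] hxL].
  case: (hL x hxL) => h1 _.
  by move: (hindA v x hvA hxA); rewrite h1.
have hcB : #|B| = #|A :\ v| + #|L|.
  by have := cardsUI (A :\ v) L; rewrite hI cards0 addn0.
have hAv : #|A| = 1 + #|A :\ v| by rewrite (cardsD1 v A) hvA.
have halpha : #|B| <= alpha e.
  by rewrite /alpha; exact: (@leq_bigmax_cond _ (independent e) (fun S : {set T} => #|S|) B hBi).
move: hmu; rewrite /mu_alpha => hmu.
lia.
Qed.
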